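(* Let $n\ge2$, let $x\in\mathbb{C}^{n\times n}$ be generic (as defined in the context), and let $d=\operatorname{diag}(d(1),\ldots,d(n))$ be an invertible diagonal matrix. Put $\hat x=dxd^{-1}$ (which is generic with the same leading principal eigenvalues as $x$). With the same fixed orderings of the eigenvalues of the leading principal submatrices, let $b_m$ and $\hat b_m$ ($1\le m\le n-1$) be the dual coordinates of $x$ and of $\hat x$ respectively. Then \[ \hat b_m=b_m\,\frac{d(m+1)}{d(m)},\qquad 1\le m\le n-1. \]
   Context: For a square matrix $x$, $x_k$ is its leading principal $k\times k$ submatrix and $E(x_k)$ its eigenvalue multiset. A matrix $x\in\mathbb{C}^{n\times n}$ is generic if for every $1\le k\le n$ the eigenvalues of $x_k$ are distinct and for every $1\le k\le n-1$, $E(x_k)\cap E(x_{k+1})=\varnothing$. Fix, for each $k$, an ordering $\mu^{(k)}_1,\ldots,\mu^{(k)}_k$ of $E(x_k)$ and put $\Lambda_k=\operatorname{diag}(\mu^{(k)}_1,\ldots,\mu^{(k)}_k)$. For generic $x$ and $1\le m\le n-1$, let $g_m\in\mathrm{GL}(m)$ be the unique matrix with $x_m=g_m\Lambda_mg_m^{-1}$ whose last row consists of ones; the dual coordinates $b_m\in\mathbb{C}^m$ of $x$ are defined by $\begin{pmatrix} g_m^{-1}&0\\0&1\end{pmatrix} x_{m+1}\begin{pmatrix} g_m&0\\0&1\end{pmatrix}=\begin{pmatrix}\Lambda_m & c_m\\ b_m^{T} & \delta_{m+1}\end{pmatrix}$ for some $c_m\in\mathbb{C}^m$, $\delta_{m+1}\in\mathbb{C}$.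 *)

(* Defs.v *)
From HB Require Import structures.
From mathcomp Require Import all_boot all_order all_algebra.
From mathcomp Require Import complex.
From mathcomp Require Import Rstruct.
Set Implicit Arguments. Unset Strict Implicit. Unset Printing Implicit Defensive.
Import Order.TTheory GRing.Theory Num.Theory.
Local Open Scope ring_scope.

Definition C : Type := (Rdefinitions.R)[i].

(* Entry (i,j) (0-indexed) of x, with 0 outside the range. *)
Definition mxentry (F : nzRingType) (n : nat) (x : 'M[F]_n) (i j : nat) : F :=
  match (insub i : option 'I_n), (insub j : option 'I_n) with
  | Some i', Some j' => x i' j'
  | _, _ => 0
  end.

(* Leading principal k x k submatrix x_k of x (meaningful for k <= n). *)
Definition lpsub (F : nzRingType) (n : nat) (k : nat) (x : 'M[F]_n) : 'M[F]_k :=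
  \matrix_(i < k, j < k) mxentry x i j.

(* s lists the eigenvalue multiset E(A) of A (with multiplicity):
   the characteristic polynomial of A splits as prod_(a <- s) (X - a). *)
Definition eigen_list (F : fieldType) (k : nat) (A : 'M[F]_k) (s : seq F) : Prop :=
  char_poly A = \prod_(a <- s) ('X - a%:P).

Definition generic (F : fieldType) (n : nat) (x : 'M[F]_n) : Prop :=
  (forall k, (1 <= k <= n)%N ->
     forall s, eigen_list (lpsub k x) s -> uniq s) /\
  (forall k, (1 <= k <= n - 1)%N ->
     forall a, ~~ (eigenvalue (lpsub k x) a && eigenvalue (lpsub k.+1 x) a)).

(* Lambda_m = diag(mu_1, ..., mu_m) from the chosen ordering s of E(x_m). *)
Definition Lambda (F : fieldType) (m : nat) (s : seq F) : 'M[F]_m :=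
  diag_mx (\row_(i < m) s`_i).

Definition is_gm (F : fieldType) (n : nat) (x : 'M[F]_n) (s : seq F) (m : nat)
  (g : 'M[F]_m) : Prop :=
  g \in unitmx /\
  lpsub m x = g *m Lambda m s *m invmx g /\
  (forall i j : 'I_m, (i : nat) = m.-1 -> g i j = 1).

(* Dual coordinate b_m (as the row vector b_m^T): the lower-left 1 x m block of
   diag(g^{-1},1) x_{m+1} diag(g,1). *)
Definition dual_b (F : fieldType) (n : nat) (x : 'M[F]_n) (m : nat) (g : 'M[F]_m)
  : 'rV[F]_m :=
  dlsubmx (block_mx (invmx g) 0 0 (1%:M : 'M[F]_1) *m lpsub (m + 1) x
           *m block_mx g 0 0 (1%:M : 'M[F]_1)).

(* Main.v *)
Require Import Defs.
From HB Require Import structures.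
From mathcomp Require Import all_boot all_order all_algebra.
From mathcomp Require Import complex.
From mathcomp Require Import Rstruct.
From mathcomp Require Import ring zify.
Import Order.TTheory GRing.Theory Num.Theory.
Local Open Scope ring_scope.

Lemma comm_diag_offdiag (F : fieldType) (m : nat) (s : seq F) (P : 'M[F]_m) :
  size s = m -> uniq s -> P *m Lambda m s = Lambda m s *m P ->
  forall i j : 'I_m, i != j -> P i j = 0.
Proof.
move=> hs hu H i j hij.
have := congr1 (fun M : 'M[F]_m => M i j) H; rewrite /Lambda mul_mx_diag mul_diag_mx !mxE /=.
move=> e.
have hne : s`_j != s`_i.
  by rewrite nth_uniq ?hs ?ltn_ord // eq_sym.
have : P i j * (s`_j - s`_i) = 0 by rewrite mulrBr e mulrC subrr.
by move/eqP; rewrite mulf_eq0 subr_eq0 (negbTE hne) orbF => /eqP.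
Qed.

Lemma mxentry_ord (F : nzRingType) (n : nat) (x : 'M[F]_n) (i j : 'I_n) :
  mxentry x i j = x i j.
Proof.
by rewrite /mxentry !valK.
Qed.

Lemma dual_bE (F : fieldType) (n : nat) (x : 'M[F]_n) (m : nat) (g : 'M[F]_m) :
  dual_b x g = \row_(j < m) \sum_(k < m) mxentry x m k * g k j.
Proof.
rewrite /dual_b -[lpsub (m+1) x]submxK !mulmx_block !mul0mx !mulmx0 !mul1mx
  !addr0 !add0r block_mxKdl.
apply/rowP => j; rewrite !mxE; apply: eq_bigr => k _.
rewrite !mxE /=.
congr (_ * _); rewrite addn0 //.
Qed.

Lemma mxentry_lt (F : nzRingType) (n : nat) (x : 'M[F]_n) (i j : nat)
  (hi : (i < n)%N) (hj : (j < n)%N) :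
  mxentry x i j = x (Ordinal hi) (Ordinal hj).
Proof. by rewrite /mxentry !insubT. Qed.
Arguments mxentry_lt {F n} x {i j}.

Theorem mainTheorem4 (n : nat) (x : 'M[C]_n) (mu : nat -> seq C) (d : nat -> C) :
  (2 <= n)%N ->
  generic x ->
  (forall k, (1 <= k <= n)%N -> eigen_list (lpsub k x) (mu k)) ->
  (forall j, (1 <= j <= n)%N -> d j != 0) ->
  let D : 'M[C]_n := diag_mx (\row_(i < n) d i.+1) in
  let xh : 'M[C]_n := D *m x *m invmx D in
  forall m : nat, (1 <= m <= n - 1)%N ->
  forall g gh : 'M[C]_m,
    is_gm x (mu m) g -> is_gm xh (mu m) gh ->
    dual_b xh gh = (d m.+1 / d m) *: dual_b x g.
Proof.
move=> hn hgen heig hd D xh m hm g gh [gu [gx g1]] [ghu [ghx gh1]].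
have hmn : (m < n)%N by case/andP: hm => h1 h2; lia.
have hm1 : (1 <= m)%N by case/andP: hm.
have hdn : forall i, (i < n)%N -> d i.+1 != 0 by move=> i hi; apply: hd; lia.
pose Dni : 'M[C]_n := diag_mx (\row_(i < n) (d i.+1)^-1).
have hDn : D *m Dni = 1%:M.
  apply/matrixP => i j; rewrite /D /Dni mulmx_diag !mxE.
  by case: eqP => [->|_]; rewrite ?mulfV ?hdn ?mulr0n ?mulr1n.
have invD : invmx D = Dni.
  have [uD _] := mulmx1_unit hDn.
  by rewrite -[Dni](mulKmx uD) hDn mulmx1.
have xhE : forall i j : 'I_n, xh i j = d i.+1 * x i j * (d j.+1)^-1.
  by move=> i j; rewrite /xh invD /Dni /D mul_mx_diag mul_diag_mx !mxE.
pose Dm : 'M[C]_m := diag_mx (\row_(i < m) d i.+1).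
pose Di : 'M[C]_m := diag_mx (\row_(i < m) (d i.+1)^-1).
have hdm : forall i : 'I_m, d i.+1 != 0 by move=> i; apply: hdn; have := ltn_ord i; lia.
have hDiDm : Di *m Dm = 1%:M.
  apply/matrixP => i j; rewrite /Di /Dm mulmx_diag !mxE.
  by case: eqP => [->|_]; rewrite ?mulVf ?hdm ?mulr0n ?mulr1n.
have hDmDi : Dm *m Di = 1%:M.
  apply/matrixP => i j; rewrite /Di /Dm mulmx_diag !mxE.
  by case: eqP => [->|_]; rewrite ?mulfV ?hdm ?mulr0n ?mulr1n.
have [uDm _] := mulmx1_unit hDmDi.
pose L := lpsub m x.
pose Lh := lpsub m xh.
have hLh : Lh = Dm *m L *m Di.
  apply/matrixP => i j; rewrite /Lh /L /Di /Dm mul_mx_diag mul_diag_mx !mxE.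
  have hi : (i < n)%N by have := ltn_ord i; lia.
  have hj : (j < n)%N by have := ltn_ord j; lia.
  by rewrite !(mxentry_lt _ hi hj) xhE.
pose Lam := Lambda m (mu m).
have hgL : L *m g = g *m Lam by rewrite /L gx mulmxKV.
have hghL : Lh *m gh = gh *m Lam by rewrite /Lh ghx mulmxKV.
pose G := Dm *m g.
have uG : G \in unitmx by rewrite unitmx_mul uDm gu.
have hG : Lh *m G = G *m Lam.
  by rewrite hLh /G -!mulmxA (mulmxA Di) hDiDm mul1mx hgL mulmxA.
pose P := invmx G *m gh.
have hLhG : Lh = G *m Lam *m invmx G by rewrite -hG mulmxK.
have hP : P *m Lam = Lam *m P.
  by rewrite /P -mulmxA -hghL hLhG -!mulmxA (mulmxA Dm g) (mulKmx uG).
have hsz : size (mu m) = m.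
  move: (heig m).
  have hk : (1 <= m <= n)%N by lia.
  move=> /(_ hk) e.
  have := size_char_poly (lpsub m x); rewrite e size_prod_XsubC.
  by case.
have hu : uniq (mu m).
  apply: (hgen.1 m); first lia.
  by apply: heig; lia.
have hoff := @comm_diag_offdiag _ _ _ _ hsz hu hP.
have ghGP : gh = G *m P by rewrite /P mulKVmx.
have ghE0 : forall i j : 'I_m, gh i j = d i.+1 * g i j * P j j.
  move=> i j; rewrite ghGP mxE (bigD1 j) //= big1 ?addr0.
    by rewrite /G mul_diag_mx mxE mxE.
  by move=> k hk; rewrite hoff ?mulr0.
have him : (m.-1 < m)%N by lia.
pose im : 'I_m := Ordinal him.
have h2 : d m != 0.
  have -> : m = (im.+1) by rewrite /= ; lia.
  exact: hdm.
have hPjj : forall j : 'I_m, P j j = (d m)^-1.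
  move=> j; have := gh1 im j erefl; rewrite ghE0 (g1 im j erefl) mulr1 /=.
  have -> : (m.-1).+1 = m by lia.
  move=> e; apply: (mulfI h2); by rewrite e mulfV.
rewrite !dual_bE; apply/rowP => j; rewrite !mxE big_distrr /=; apply: eq_bigr => k _.
have hk : (k < n)%N by have := ltn_ord k; lia.
rewrite !(mxentry_lt _ hmn hk) xhE ghE0 hPjj /=.
have h1 := hdm k.
set a := x _ _; set b := g k j; set u := d k.+1; set v := d m; set w := d m.+1.
rewrite -!mulrA (mulKf h1); congr (_ * _).
by rewrite mulrA mulrC.
Qed.
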